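(* Let $s\ge1$, $r_1,\dots,r_s$ positive integers and $n_1,\dots,n_s$ real numbers with $0\le n_1<n_2<\cdots<n_{s-1}\le n_s-1$, and put $f(x)=(x-n_1)^{r_1}(x-n_2)^{r_2}\cdots(x-n_s)^{r_s}\in\mathbb R[x]$. For a nonconstant polynomial $p$ let $\rho(p)$ denote the maximum modulus of its complex roots. Then: (1) $f(x)-1$ has a unique real root $x_0$ in the interval $(n_s,n_s+1]$, and $\rho(f(x)-1)=x_0$. (2) If $0\le m\le n_s-1$, then $\rho((x-m)f(x)-1)<\rho(f(x)-1)$. (3) $\rho((x-n_s)f(x)-1)\ge\rho(f(x)-1)$, with equality if and only if $s=1$. *)

(* Defs.v *)
From HB Require Import structures.
From mathcomp Require Import all_boot all_order all_algebra.
From mathcomp Require Import classical_sets reals.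
From mathcomp Require Import complex.
Set Implicit Arguments. Unset Strict Implicit. Unset Printing Implicit Defensive.
Import Order.TTheory GRing.Theory Num.Theory.
Local Open Scope ring_scope.
Local Open Scope classical_set_scope.

Definition croots (R : realType) (p : {poly R}) : set R[i] :=
  [set z : R[i] | root (map_poly (real_complex R) p) z].

(* rho p = maximum modulus of the complex roots of p
   (for nonconstant p this set of moduli is finite and nonempty,
   so the supremum is its maximum) *)
Definition rho (R : realType) (p : {poly R}) : R :=
  sup [set Normc.normc z | z in croots p].

(* f(x) = prod_{i<s} (x - n_i)^{r_i}, indices 0..s-1 *)
Definition fpoly (R : realType) (s : nat) (r : nat -> nat) (n : nat -> R)
  : {poly R} := \prod_(i < s) ('X - (n i)%:P) ^+ (r i).

(* Main.v *)
Require Import Defs.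
From HB Require Import structures.
From mathcomp Require Import all_boot all_order all_algebra.
From mathcomp Require Import classical_sets reals.
From mathcomp Require Import complex.
From mathcomp Require Import polyrcf zify lra.
Import Order.TTheory GRing.Theory Num.Theory.
Local Open Scope ring_scope.

Section Helpers.
Local Open Scope classical_set_scope.
Variable R : realType.
Local Notation rc := (real_complex R).
Local Notation nc := (@Normc.normc R).

Lemma normcE (z : R[i]) : `|z| = rc (nc z).
Proof. by case: z => a b; rewrite normc_def. Qed.

Lemma nc_ge0 (z : R[i]) : 0 <= nc z.
Proof. by case: z => a b; rewrite /= sqrtr_ge0. Qed.

Lemma nc_real (x : R) : nc (rc x) = `|x|.
Proof. by rewrite /= expr0n /= addr0 sqrtr_sqr. Qed.

Lemma norm_sub_ge (z : R[i]) (a : R) : 0 <= a -> rc (nc z - a) <= `|z - rc a|.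
Proof.
move=> a0; have Ha : `|rc a| = rc a by rewrite ger0_norm // ler0c.
have := lerB_dist z (rc a); rewrite Ha normcE rmorphB; exact.
Qed.

Lemma prod_bound (k : nat) (e : nat -> nat) (a : nat -> R) (z : R[i]) :
  (forall i, (i < k)%N -> 0 <= a i <= nc z) ->
  rc (\prod_(i < k) (nc z - a i) ^+ e i) <= `|\prod_(i < k) (z - rc (a i)) ^+ e i|.
Proof.
move=> ha; rewrite rmorph_prod normr_prod; apply: ler_prod => i _.
have /andP[a0 az] := ha i (ltn_ord i).
rewrite rmorphXn normrX; apply/andP; split.
  by apply: exprn_ge0; rewrite ler0c subr_ge0.
apply: lerXn2r; [by rewrite nnegrE ler0c subr_ge0| by rewrite nnegrE normr_ge0 | exact: norm_sub_ge].
Qed.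

Lemma feval s r n (x : R) : (fpoly s r n).[x] = \prod_(i < s) (x - n i) ^+ r i.
Proof. by rewrite /fpoly horner_prod; apply: eq_bigr => i _; rewrite !hornerE. Qed.

Lemma fevalC s r n (z : R[i]) :
  (map_poly rc (fpoly s r n)).[z] = \prod_(i < s) (z - rc (n i)) ^+ r i.
Proof.
rewrite /fpoly rmorph_prod horner_prod; apply: eq_bigr => i _.
by rewrite rmorphXn rmorphB /= map_polyX map_polyC !hornerE.
Qed.


Lemma rho_le (p : {poly R}) b : 0 <= b ->
  (forall z, root (map_poly rc p) z -> nc z <= b) -> rho p <= b.
Proof.
move=> b0 hb; rewrite /rho.
have [->|/set0P ne] := eqVneq [set nc z | z in croots p] set0.
  by rewrite sup0.
apply: ge_sup => // _ [z hz <-]; exact: hb.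
Qed.

Lemma rho_ge (p : {poly R}) b x : 0 <= x -> root p x ->
  (forall z, root (map_poly rc p) z -> nc z <= b) -> x <= rho p.
Proof.
move=> x0 rx hb; rewrite /rho.
have : [set nc z | z in croots p] x.
  exists (rc x); last by rewrite nc_real ger0_norm.
  by rewrite /croots /= fmorph_root.
apply: ub_le_sup; exists b => _ [z hz <-]; exact: hb.
Qed.

Lemma lec1 (x : R) : (rc x <= 1) = (x <= 1).
Proof. exact: (lecR x 1). Qed.

End Helpers.


Theorem lemma6p1 (R : realType) (s : nat) (r : nat -> nat) (n : nat -> R)
  (hs : (0 < s)%N)
  (hr : forall i, (i < s)%N -> (0 < r i)%N)
  (hn0 : 0 <= n 0%N)
  (hinc : forall i, (i.+2 < s)%N -> n i < n i.+1)
  (hlast : (1 < s)%N -> n (s - 2)%N <= n (s - 1)%N - 1) :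
  let f := fpoly s r n in
  let ns := n (s - 1)%N in
  [/\ (exists x0 : R,
         [/\ ns < x0 <= ns + 1, root (f - 1) x0,
             forall y : R, ns < y <= ns + 1 -> root (f - 1) y -> y = x0
           & rho (f - 1) = x0]),
      (forall m : R, 0 <= m <= ns - 1 ->
         rho (('X - m%:P) * f - 1) < rho (f - 1))
    & rho (f - 1) <= rho (('X - ns%:P) * f - 1) /\
      (rho (('X - ns%:P) * f - 1) = rho (f - 1) <-> s = 1%N)].
Proof.
move=> f ns.
pose F := fun t : R => \prod_(i < s) (t - n i) ^+ r i.
have hfx : forall x, f.[x] = F x by move=> x; rewrite /f feval.
have hfz : forall z, (map_poly (real_complex R) f).[z] =
   \prod_(i < s) (z - real_complex R (n i)) ^+ r i by move=> z; rewrite /f fevalC.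
have hmono : forall j, (j.+2 <= s)%N -> forall i, (i <= j)%N -> n i <= n j.
  elim=> [|j IH] hj i; first by rewrite leqn0 => /eqP ->.
  rewrite leq_eqVlt => /orP[/eqP -> //|hij].
  apply: le_trans (IH (ltnW hj) i hij) _; apply: ltW; apply: hinc; exact: hj.
have hni1 : forall i, (i.+1 < s)%N -> 0 <= n i <= ns - 1.
  move=> i hi; have hs2 : (1 < s)%N by lia.
  apply/andP; split.
    by apply: le_trans hn0 _; apply: (hmono i) => //; lia.
  apply: le_trans (hlast hs2); apply: hmono; lia.
have hns0 : 0 <= ns.
  case: (ltnP 1 s) => hs2.
    have h : ((s - 2).+1 < s)%N by lia.
    have /andP[h1 h2] := hni1 (s - 2)%N h.
    have := hlast hs2; rewrite /ns; lra.
  have -> : ns = n 0%N by rewrite /ns; congr n; lia.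
  exact: hn0.
have hni : forall i, (i < s)%N -> 0 <= n i <= ns.
  move=> i hi; case: (ltnP i.+1 s) => hi2.
    by have /andP[h1 h2] := hni1 i hi2; apply/andP; split; lra.
  have -> : i = (s - 1)%N by lia.
  by rewrite hns0 lexx.
have hFge0 : forall t, ns <= t -> 0 <= F t.
  move=> t ht; apply: prodr_ge0 => i _; apply: exprn_ge0.
  by have /andP[_ h] := hni i (ltn_ord i); rewrite subr_ge0; apply: le_trans ht.
have hFmono : forall x y, ns <= x -> x <= y -> F x <= F y.
  move=> x y hx hxy; apply: ler_prod => i _.
  have /andP[_ h] := hni i (ltn_ord i).
  rewrite exprn_ge0 ?subr_ge0 /=; last by apply: le_trans hx.
  apply: lerXn2r; rewrite ?nnegrE; lra.
have hFstrict : forall x y, ns <= x -> x < y -> F x < F y.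
  move=> x y hx hxy; apply: ltr_prod.
    by apply/hasP; exists (Ordinal hs) => //; rewrite mem_index_enum.
  move=> i _; have /andP[_ h] := hni i (ltn_ord i).
  rewrite exprn_ge0 ?subr_ge0 /=; last by apply: le_trans hx.
  rewrite ltrXn2r ?subr_ge0 ?ltrD2r //; last by apply: le_trans hx.
  by rewrite -lt0n hr.
have hs1 : (s - 1 < s)%N by lia.
have hFns : F ns = 0.
  rewrite /F (bigD1 (Ordinal hs1)) //= subrr expr0n.
  have -> : (r (s - 1)%N == 0%N) = false by apply/negbTE; rewrite -lt0n hr.
  by rewrite mul0r.
have hF1 : 1 <= F (ns + 1).
  have : \prod_(i < s) (1 : R) <= F (ns + 1).
    apply: ler_prod => i _; have /andP[h1 h2] := hni i (ltn_ord i).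
    rewrite ler01 /=; apply: exprn_ege1; lra.
  by rewrite big1_eq.
have hF1s : (1 < s)%N -> 1 < F (ns + 1).
  move=> hs2; have hs0 : (0 < s)%N by [].
  rewrite /F (bigD1 (Ordinal hs0)) //=.
  have h0 : 1 < (ns + 1 - n 0%N) ^+ r 0%N.
    rewrite exprn_egt1; last by have /andP[h1 h2] := hni1 0%N hs2; lra.
    by rewrite -lt0n hr.
  have h1 : 1 <= \prod_(i < s | i != Ordinal hs0) (ns + 1 - n i) ^+ r i.
    have : \prod_(i < s | i != Ordinal hs0) (1 : R) <=
           \prod_(i < s | i != Ordinal hs0) (ns + 1 - n i) ^+ r i.
      apply: ler_prod => i _; have /andP[h1 h2] := hni i (ltn_ord i).
      rewrite ler01 /=; apply: exprn_ege1; lra.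
    by rewrite big1_eq.
  nra.
have hFs1 : s = 1%N -> F (ns + 1) = 1.
  move=> e; rewrite /F /ns e big_ord1 subnn /=.
  by rewrite addrAC subrr add0r expr1n.
have hz_bound : forall (z : R[i]), ns <= Normc.normc z ->
    real_complex R (F (Normc.normc z)) <=
    `|\prod_(i < s) (z - real_complex R (n i)) ^+ r i|.
  move=> z hz; apply: prod_bound => i hi; have /andP[h1 h2] := hni i hi.
  by rewrite h1 /=; apply: le_trans hz.
have [x0 hx0 rx0] : {x | x \in `[ns, ns + 1] & root (f - 1) x}.
  apply: polyrcf.poly_ivt; first by rewrite lerDl ler01.
  rewrite !hornerE !hfx hFns sub0r mulN1r oppr_le0 subr_ge0; exact: hF1.
move: hx0; rewrite in_itv /= => /andP[x0a x0b].
have Fx0 : F x0 = 1 by move: rx0; rewrite rootE !hornerE hfx subr_eq0 => /eqP.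
have x0gt : ns < x0.
  rewrite lt_neqAle x0a andbT; apply/eqP => e.
  by move: Fx0; rewrite -e hFns => /eqP; rewrite eq_sym oner_eq0.
have huniq : forall y, ns < y <= ns + 1 -> root (f - 1) y -> y = x0.
  move=> y /andP[y1 y2]; rewrite rootE !hornerE hfx subr_eq0 => /eqP Fy.
  case: (ltgtP y x0) => // h.
    by have := hFstrict y x0 (ltW y1) h; rewrite Fy Fx0 ltxx.
  by have := hFstrict x0 y (ltW x0gt) h; rewrite Fy Fx0 ltxx.
have hz1 : forall z, root (map_poly (real_complex R) (f - 1)) z ->
    Normc.normc z <= x0.
  move=> z; rewrite rootE rmorphB rmorph1 !hornerE hfz subr_eq0 => /eqP hz.
  rewrite leNgt; apply/negP => hlt.
  have hb := hz_bound z ltac:(lra).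
  rewrite hz normr1 lec1 in hb.
  have := hFstrict x0 (Normc.normc z) (ltW x0gt) hlt; rewrite Fx0 => h.
  by have := lt_le_trans h hb; rewrite ltxx.
have rho1 : rho (f - 1) = x0.
  apply/le_anti/andP; split.
    apply: rho_le hz1; lra.
  apply: (@rho_ge R _ x0 x0) => //; lra.
split.
- by exists x0; split => //; rewrite x0gt x0b.
- move=> m /andP[m0 m1]; rewrite rho1.
  set g := ('X - m%:P) * f - 1.
  have hg : forall x, g.[x] = (x - m) * F x - 1 by move=> x; rewrite /g !hornerE hfx.
  have [c hc rcg] : {x | x \in `[ns, x0] & root g x}.
    apply: polyrcf.poly_ivt; first exact: ltW.
    rewrite !hg hFns Fx0 mulr0 sub0r mulr1 mulN1r oppr_le0 subr_ge0; lra.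
  move: hc; rewrite in_itv /= => /andP[c1 c2].
  have Fc : (c - m) * F c = 1 by move: rcg; rewrite rootE hg subr_eq0 => /eqP.
  have cx0 : c < x0.
    rewrite lt_neqAle c2 andbT; apply/eqP => e.
    move: Fc; rewrite e Fx0 mulr1 => e2; lra.
  apply: le_lt_trans cx0; apply: rho_le; first lra.
  move=> z; rewrite rootE /g rmorphB rmorphM rmorph1 rmorphB /= map_polyX map_polyC.
  rewrite !hornerE hfz subr_eq0 => /eqP hz.
  rewrite leNgt; apply/negP => hlt.
  have hb := hz_bound z ltac:(lra).
  have hm := @norm_sub_ge R z m m0.
  have : real_complex R ((Normc.normc z - m) * F (Normc.normc z)) <= 1.
    rewrite -normr1 -hz normrM rmorphM; apply: ler_pM => //.
      by rewrite ler0c; lra.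
    by rewrite ler0c; apply: hFge0; lra.
  rewrite lec1 => hle.
  have : 1 < (Normc.normc z - m) * F (Normc.normc z).
    rewrite -Fc; apply: ltr_pM; try lra.
      by apply: hFge0.
    by apply: hFstrict.
  lra.
set g3 := ('X - ns%:P) * f - 1.
have hg3 : forall x, g3.[x] = (x - ns) * F x - 1 by move=> x; rewrite /g3 !hornerE hfx.
have hz3 : forall z, root (map_poly (real_complex R) g3) z -> Normc.normc z <= ns + 1.
  move=> z; rewrite rootE /g3 rmorphB rmorphM rmorph1 rmorphB /= map_polyX map_polyC.
  rewrite !hornerE hfz subr_eq0 => /eqP hz.
  rewrite leNgt; apply/negP => hlt.
  have hb := hz_bound z ltac:(lra).
  have hm := @norm_sub_ge R z ns hns0.
  have : real_complex R ((Normc.normc z - ns) * F (Normc.normc z)) <= 1.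
    rewrite -normr1 -hz normrM rmorphM; apply: ler_pM => //.
      by rewrite ler0c; lra.
    by rewrite ler0c; apply: hFge0; lra.
  rewrite lec1 => hle.
  have hFt : 1 <= F (Normc.normc z).
    apply: le_trans hF1 _; apply: hFmono; lra.
  nra.
have [y hy ry] : {x | x \in `[x0, ns + 1] & root g3 x}.
  apply: polyrcf.poly_ivt; first exact: x0b.
  rewrite !hg3 Fx0 mulr1; apply: mulr_le0_ge0; lra.
move: hy; rewrite in_itv /= => /andP[y1 y2].
have hyrho : y <= rho g3 by apply: (@rho_ge R _ (ns + 1) y) => //; lra.
split; first by rewrite rho1; lra.
split.
  rewrite rho1 => e; apply/eqP; rewrite eqn_leq hs andbT leqNgt; apply/negP => hs2.
  have h1 := hF1s hs2.
  have x0lt : x0 < ns + 1.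
    rewrite lt_neqAle x0b andbT; apply/eqP => e2.
    by move: h1; rewrite -e2 Fx0 ltxx.
  have ylt : x0 < y.
    rewrite lt_neqAle y1 andbT; apply/eqP => e2.
    move: ry; rewrite rootE hg3 -e2 Fx0 mulr1 => /eqP; lra.
  lra.
move=> e; rewrite rho1.
have ex0 : ns + 1 = x0.
  apply: huniq; first by apply/andP; split; lra.
  by rewrite rootE !hornerE hfx hFs1 // subrr.
apply/le_anti/andP; split.
  by rewrite -ex0; apply: rho_le hz3; lra.
lra.
Qed.
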